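(* Let $k\in\mathbb N$, let $G=(V,E)$ be a graph, let $A,B\subseteq V$ and $v_0\in V$ satisfy: (A1) $A\cap B=\emptyset$, $|A|\ge k$ and $|B|\ge \mathscr R_k$; (A2) $A$ is a clique in $G$; (A3) $\{u,v_0\}\in E$ for every $u\in A$ and $\{v,v_0\}\notin E$ for every $v\in B$; (A4) $\{u,v\}\in E$ for every $u\in A$ and $v\in B$. Then $G$ has a $k$-edge induced subgraph.
   Context: All graphs are simple (finite, nonempty vertex set, undirected, no loops or multiple edges). $\mathscr R_k$ denotes the Ramsey number: the least number such that every graph with at least $\mathscr R_k$ vertices has a clique of size $k$ or an independent set of size $k$. A $k$-edge induced subgraph of $G$ is an induced subgraph $G[S]$ ($S\neq\emptyset$) with exactly $k$ edges. *)

(* Defs.v *)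
From mathcomp Require Import all_boot.
Set Implicit Arguments. Unset Strict Implicit. Unset Printing Implicit Defensive.

Definition simple_graph (T : finType) (e : rel T) : Prop :=
  symmetric e /\ irreflexive e.

Definition is_clique (T : finType) (e : rel T) (S : {set T}) : Prop :=
  forall u v, u \in S -> v \in S -> u != v -> e u v.
Definition is_indep (T : finType) (e : rel T) (S : {set T}) : Prop :=
  forall u v, u \in S -> v \in S -> ~~ e u v.

(* every graph with at least n vertices has a clique or an independent set of size k
   (graphs have a nonempty vertex set) *)
Definition ramsey_prop (k n : nat) : Prop :=
  forall (T : finType) (e : rel T), simple_graph e -> 0 < #|T| -> n <= #|T| ->
    exists S : {set T}, #|S| = k /\ (is_clique e S \/ is_indep e S).

Definition is_ramsey_number (k R : nat) : Prop :=
  ramsey_prop k R /\ forall n, ramsey_prop k n -> R <= n.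

Definition induced_edges (T : finType) (e : rel T) (S : {set T}) : {set {set T}} :=
  [set E : {set T} | (E \subset S) && (#|E| == 2) &&
     [forall u in E, forall v in E, (u != v) ==> e u v]].

Definition has_k_edge_induced (T : finType) (e : rel T) (k : nat) : Prop :=
  exists S : {set T}, S != set0 /\ #|induced_edges e S| = k.

(* Main.v *)
Require Import Defs.
From mathcomp Require Import all_boot.
Set Warnings "-notation-overridden".
Set Implicit Arguments. Unset Strict Implicit.

Section G.
Variables (T : finType) (e : rel T).
Hypothesis He : simple_graph e.

Lemma ieP (S E : {set T}) : reflect (exists u w, [/\ u != w, u \in S, w \in S, e u w & E = [set u; w]])
  (E \in induced_edges e S).
Proof.
rewrite inE; apply: (iffP idP).
- case/andP=> /andP[sub /cards2P[u [w [uw EE]]]] /forall_inP H.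
  subst E; exists u, w; split => //.
  + by apply: (subsetP sub); rewrite !inE eqxx.
  + by apply: (subsetP sub); rewrite !inE eqxx orbT.
  + have /forall_inP H2 := H u (setU11 _ _).
    have := H2 w; rewrite !inE eqxx orbT uw; apply; done.
- case=> u [w [uw uS wS euw ->]].
  rewrite cards2 uw eqxx andbT; apply/andP; split.
  + by apply/subsetP=> z; rewrite !inE => /orP[] /eqP ->.
  + apply/forall_inP => a; rewrite !inE => /orP[]/eqP->;
    apply/forall_inP=> b; rewrite !inE => /orP[]/eqP->; rewrite ?eqxx //=; by rewrite ?(He.1 w u) ?uw ?euw // eq_sym uw.

Qed.

Lemma ie_add x (S : {set T}) : x \notin S ->
  #|induced_edges e (x |: S)| = #|induced_edges e S| + #|[set y in S | e x y]|.
Proof.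
move=> xS.
have -> : induced_edges e (x |: S) =
   induced_edges e S :|: ((fun y => [set x; y]) @: [set y in S | e x y]).
  apply/setP=> E; rewrite in_setU; apply/ieP/orP.
  - case=> u [w [uw]]; rewrite !in_setU1 => /orP[/eqP ?|uS] /orP[/eqP ?|wS] euw ->; subst.
    + by rewrite eqxx in uw.
    + by right; apply/imsetP; exists w; rewrite // inE wS.
    + right; apply/imsetP; exists u; first by rewrite inE uS -He.1.
      by apply/setP=> z; rewrite !inE orbC.
    + by left; apply/ieP; exists u, w.
  - case=> [/ieP [u [w [uw uS wS euw ->]]]|/imsetP[y]].
    + by exists u, w; split; rewrite // !in_setU1 ?uS ?wS orbT.
    + rewrite inE => /andP[yS exy] ->; exists x, y; rewrite !in_setU1 eqxx yS orbT.
      split => //; apply: contraNneq xS => ->; done.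
rewrite cardsU.
have -> : induced_edges e S :&: [set [set x; y] | y in [set y in S | e x y]] = set0.
  apply/setP=> E; rewrite in_setI in_set0; apply/andP; case=> /ieP[u [w [_ uS wS _ ->]]] /imsetP[y _ EE].
  have : x \in [set u; w] by rewrite EE !inE eqxx.
  by rewrite !inE => /orP[]/eqP H; subst x; rewrite ?uS ?wS in xS.
rewrite cards0 subn0 card_in_imset //.
move=> y1 y2; rewrite !inE => /andP[y1S _] /andP[y2S _] EE.
have : y1 \in [set x; y2] by rewrite -EE !inE eqxx orbT.
rewrite !inE => /orP[]/eqP H //; subst y1; by rewrite y1S in xS.
Qed.


Lemma ie_empty (S : {set T}) : (forall u w, u \in S -> w \in S -> ~~ e u w) ->
  #|induced_edges e S| = 0.
Proof.
move=> H; apply/eqP; rewrite cards_eq0; apply/eqP/setP=> E; rewrite in_set0.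
apply/negP => /ieP[u [w [_ uS wS euw _]]].
by have := H u w uS wS; rewrite euw.
Qed.

Lemma clique_count n (S : {set T}) : #|S| = n -> is_clique e S ->
  #|induced_edges e S| = 'C(n, 2).
Proof.
elim: n S => [|n IH] S Sn HS.
  rewrite ie_empty // => u w uS; move: Sn => /eqP; rewrite cards_eq0 => /eqP Se.
  by rewrite Se in_set0 in uS.
have /card_gt0P [x xS] : 0 < #|S| by rewrite Sn.
rewrite -(setD1K xS) ie_add ?setD11 //.
have Sn' : #|S :\ x| = n by move: Sn; rewrite (cardsD1 x S) xS add1n => -[].
rewrite (IH _ Sn'); last first.
  by move=> u v; rewrite !inE => /andP[_ uS] /andP[_ vS]; apply: HS.
have -> : [set y in S :\ x | e x y] = S :\ x.
  apply/setP=> y; rewrite !inE; case: (boolP (y \in S)); rewrite ?andbF ?andbT //.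
  case: (eqVneq y x) => //= yx yS.
  by apply: HS => //; rewrite eq_sym.
by rewrite Sn' binS bin1.
Qed.

Lemma sub_size (C : {set T}) i : i <= #|C| -> exists D : {set T}, D \subset C /\ #|D| = i.
Proof.
move En: #|C| => n; elim: n C En => [|n IH] C En Hi.
  by exists C; split => //; rewrite En; case: i Hi.
case: (ltngtP i n.+1) Hi => // [Hi|Hi] _; last by exists C; rewrite En Hi.
have /card_gt0P [x xS] : 0 < #|C| by rewrite En.
have Sn' : #|C :\ x| = n by move: En; rewrite (cardsD1 x C) xS add1n => -[].
have [D [DC Di]] := IH _ Sn' Hi.
exists D; split => //; apply: subset_trans DC _; apply: subD1set.
Qed.

End G.

Lemma arith k : exists i j, i + j <= k /\ 'C(i + j, 2) + j = k.
Proof.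
elim: k => [|k [i [j [H1 H2]]]]; first by exists 0, 0.
case: i H1 H2 => [|i] H1 H2.
  exists j, 1; rewrite addn1 ltnS; split => //.
  by rewrite binS bin1 -H2 add0n addn1.
exists i, j.+1; rewrite addnS -addSn; split; first exact: leqW.
by rewrite addnS H2.
Qed.

Lemma main_clique (T : finType) (e : rel T) (A B C : {set T}) (v0 : T) i j :
  simple_graph e -> [disjoint A & B] -> is_clique e A ->
  (forall u, u \in A -> e u v0) ->
  (forall v, v \in B -> ~~ e v v0) ->
  (forall u v, u \in A -> v \in B -> e u v) ->
  C \subset B -> is_clique e C -> v0 \notin C -> i <= #|C| -> j <= #|A| ->
  has_k_edge_induced e ('C(i + j, 2) + j).
Proof.
move=> He dAB cA hA hB hAB CB cC v0C hi hj.
have [Ci [CiC Cii]] := sub_size hi.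
have [Aj [AjA Ajj]] := sub_size hj.
have CiB : Ci \subset B := subset_trans CiC CB.
have dis : Ci :&: Aj = set0.
  apply/setP=> x; rewrite !inE; apply/negP => /andP[/(subsetP CiB) xB /(subsetP AjA) xA].
  by have := disjoint_setI0 dAB; move/setP/(_ x); rewrite !inE xA xB.
have cX : #|Ci :|: Aj| = i + j by rewrite cardsU dis cards0 subn0 Cii Ajj.
have clX : is_clique e (Ci :|: Aj).
  move=> u v; rewrite !inE => /orP[uC|uA] /orP[vC|vA] uv.
  - by apply: cC => //; apply: (subsetP CiC).
  - by rewrite He.1; apply: hAB; [apply: (subsetP AjA)|apply: (subsetP CiB)].
  - by apply: hAB; [apply: (subsetP AjA)|apply: (subsetP CiB)].
  - by apply: cA => //; apply: (subsetP AjA).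
have v0X : v0 \notin Ci :|: Aj.
  rewrite !inE negb_or; apply/andP; split.
    by apply: contra v0C; apply: (subsetP CiC).
  apply/negP => /(subsetP AjA) /hA; by rewrite He.2.
exists (v0 |: (Ci :|: Aj)); split.
  by apply/set0Pn; exists v0; rewrite setU11.
rewrite ie_add // (clique_count He cX clX) -Ajj; congr (_ + _); apply: eq_card => y.
rewrite !inE; case: (boolP (y \in Aj)) => yA; rewrite ?orbT ?orbF /=.
  by rewrite He.1 hA //; apply: (subsetP AjA).
by apply/negP=> /andP[/(subsetP CiB) /hB]; rewrite He.1 => /negP.
Qed.

Unset Implicit Arguments.

Theorem lemma3p6 (k : nat) (T : finType) (e : rel T) (A B : {set T}) (v0 : T) :
  simple_graph e ->
  [disjoint A & B] ->
  k <= #|A| ->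
  (exists R, is_ramsey_number k R /\ R <= #|B|) ->
  is_clique e A ->
  (forall u, u \in A -> e u v0) ->
  (forall v, v \in B -> ~~ e v v0) ->
  (forall u v, u \in A -> v \in B -> e u v) ->
  has_k_edge_induced e k.
Proof.
move=> He dAB kA [R [[HR _] RB]] cA hA hB hAB.
have [i [j [ijk Hk]]] := arith k.
have jA : j <= #|A| by apply: leq_trans kA; apply: leq_trans ijk; apply: leq_addl.
case: (leqP k 1) => k1.
  have i0 : i = 0.
    clear jA; have ij1 := leq_trans ijk k1; move: ij1 Hk ijk; case: i => [|[|i]] //; case: j => [|j] // _ <-; by rewrite addn0 bin_small.
  rewrite -Hk; apply: (main_clique He dAB cA hA hB hAB (sub0set B)) => //.
  - by move=> u v; rewrite in_set0.
  - by rewrite in_set0.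
  - by rewrite i0.
pose T' := {x : T | x \in B}.
pose e' := fun x y : T' => e (val x) (val y).
have He' : simple_graph e'.
  by split; [move=> x y; rewrite /e' He.1 | move=> x; rewrite /e' He.2].
have cT' : #|{: T'}| = #|B| by rewrite card_sig; apply: eq_card.
have B0 : 0 < #|B|.
  rewrite lt0n; apply/negP => /eqP B0; move: RB; rewrite B0 leqn0 => /eqP R0.
  have Hu : simple_graph (fun _ _ : unit => false) by [].
  have [S [Sk _]] : exists S : {set unit}, #|S| = k /\ (is_clique (fun _ _ : unit => false) S \/ is_indep (fun _ _ : unit => false) S).
    by apply: (HR unit _ Hu) => //; rewrite ?R0 // card_unit.
  by move: (max_card S) k1; rewrite Sk card_unit ltnNge => ->.
have [S' [S'k HS']] : exists S : {set T'}, #|S| = k /\ (is_clique e' S \/ is_indep e' S).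
  by apply: HR => //; rewrite cT'.
pose K := val @: S'.
have Kk : #|K| = k by rewrite card_imset //; apply: val_inj.
have KB : K \subset B by apply/subsetP=> x /imsetP[y _ ->]; apply: valP.
case: HS' => [cS'|iS'].
  have cK : is_clique e K.
    move=> u v /imsetP[u' u'S ->] /imsetP[v' v'S ->] uv.
    by apply: cS' => //; apply: contra uv => /eqP ->.
  have v0K : v0 \notin K.
    apply/negP => v0K.
    have : 0 < #|K :\ v0| by move: k1; rewrite -Kk (cardsD1 v0) v0K add1n ltnS.
    case/card_gt0P => w; rewrite !inE => /andP[wv0 wK].
    by have := hB w (subsetP KB _ wK); rewrite cK.
  rewrite -Hk; apply: (main_clique He dAB cA hA hB hAB KB cK v0K) => //.
  by rewrite Kk; apply: leq_trans ijk; apply: leq_addr.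
have iK : forall u w, u \in K -> w \in K -> ~~ e u w.
  by move=> u v /imsetP[u' u'S ->] /imsetP[v' v'S ->]; apply: iS'.
have /card_gt0P [a aA] : 0 < #|A| by apply: leq_trans kA; apply: ltnW.
have aK : a \notin K.
  apply/negP => /(subsetP KB) aB.
  by have := disjoint_setI0 dAB; move/setP/(_ a); rewrite !inE aA aB.
exists (a |: K); split; first by apply/set0Pn; exists a; rewrite setU11.
rewrite ie_add // ie_empty // add0n -Kk; apply: eq_card => y; rewrite !inE.
case: (boolP (y \in K)) => //= yK; apply: hAB => //; exact: subsetP KB _ yK.
Qed.
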